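(* Let $r=[r_0,\ldots,r_m]$ and $c=[c_0,\ldots,c_n]$ be selections of rows and columns of the Pascal upper triangular matrix $T$. If $r_0>c_n$, then $T_{r,c}$ is the zero matrix and has rank $0$. Otherwise, define $M:=\max\{i : r_i\le c_n\}$, $\beta_0:=\min\{k : r_0\le c_k\}$, and for $i=1,\ldots,M$, $\beta_i:=\max\{\min\{k: r_i\le c_k\},\ \beta_{i-1}+1\}$; let $p:=\max\{i\in\{0,\ldots,M\} : \beta_i\le n\}$, $\alpha=[0,1,\ldots,p]$, $\beta=[\beta_0,\ldots,\beta_p]$, $\hat r=[r_0,\ldots,r_p]$ and $\hat c=[c_{\beta_0},\ldots,c_{\beta_p}]$. Then $\{\hat r,\hat c\}$ is a maximal ordered sub-pair of $\{r,c\}$; consequently $\operatorname{rank}(T_{r,c})=p+1$, $T_{\hat r,\hat c}$ is invertible, the rows of $T_{\hat r,c}$ form a basis of the row space of $T_{r,c}$, and the columns of $T_{r,\hat c}$ form a basis of the column space of $T_{r,c}$.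
   Context: The Pascal upper triangular matrix is the infinite matrix $T=(T_{i,j})_{i,j\ge 0}$ with $T_{i,j}=\binom{j}{i}$, where $\binom{j}{i}:=0$ if $i>j$ (rows and columns indexed from $0$). A selection of rows (resp. columns) is a strictly increasing finite sequence of nonnegative integers. For selections $r=[r_0,\ldots,r_m]$ and $c=[c_0,\ldots,c_n]$, $T_{r,c}$ denotes the $(m+1)\times(n+1)$ matrix whose $(i,j)$ entry is $\binom{c_j}{r_i}$. A pair $\{\hat r,\hat c\}$ is an ordered sub-pair of $\{r,c\}$ of length $p+1$ if $\hat r=[\hat r_0,\ldots,\hat r_p]$ is a subsequence of $r$, $\hat c=[\hat c_0,\ldots,\hat c_p]$ is a subsequence of $c$, and $\hat r_i\le \hat c_i$ for all $i=0,\ldots,p$ (the empty pair has length $0$). It is maximal if no ordered sub-pair of $\{r,c\}$ has length greater than $p+1$. *)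

(* Defs.v *)
From HB Require Import structures.
From mathcomp Require Import all_boot all_order all_algebra.
Set Implicit Arguments. Unset Strict Implicit. Unset Printing Implicit Defensive.
Import GRing.Theory Num.Theory.

Definition selection (s : seq nat) : bool := sorted ltn s.

(* The submatrix T_{r,c} of the Pascal upper triangular matrix, with explicit
   dimensions a x b; entry (i,j) is binom(c_j, r_i) (= 0 when r_i > c_j). *)
Definition Tsub (R : pzRingType) (a b : nat) (r c : seq nat) : 'M[R]_(a, b) :=
  \matrix_(i < a, j < b) (('C(nth 0 c j, nth 0 r i))%:R)%R.

Definition ordered_subpair (r c hr hc : seq nat) : Prop :=
  [/\ subseq hr r, subseq hc c, size hr = size hc &
      forall i, i < size hr -> nth 0 hr i <= nth 0 hc i].

Definition maximal_ordered_subpair (r c hr hc : seq nat) : Prop :=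
  ordered_subpair r c hr hc /\
  forall r' c', ordered_subpair r c r' c' -> size r' <= size hr.

Definition Mdef (m n : nat) (r c : seq nat) : nat :=
  \max_(i < m.+1 | nth 0 r i <= nth 0 c n) i.

Definition firstcol (r c : seq nat) (i : nat) : nat :=
  find (fun ck => nth 0 r i <= ck) c.

Fixpoint beta (r c : seq nat) (i : nat) : nat :=
  match i with
  | 0 => firstcol r c 0
  | i'.+1 => maxn (firstcol r c i'.+1) (beta r c i').+1
  end.

Definition pdef (m n : nat) (r c : seq nat) : nat :=
  \max_(i < (Mdef m n r c).+1 | beta r c i <= n) i.

Definition rhat (m n : nat) (r c : seq nat) : seq nat :=
  mkseq (fun i => nth 0 r i) (pdef m n r c).+1.

Definition chat (m n : nat) (r c : seq nat) : seq nat :=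
  mkseq (fun i => nth 0 c (beta r c i)) (pdef m n r c).+1.

(* Main.v *)
Require Import Defs.
From HB Require Import structures.
From mathcomp Require Import all_boot all_order all_algebra.
From mathcomp Require Import zify.
Import GRing.Theory Num.Theory.

Module Helpers.
Set Implicit Arguments. Unset Strict Implicit. Unset Printing Implicit Defensive.

Lemma hockey a b : \sum_(k < b) 'C(k, a) = 'C(b, a.+1).
Proof.
elim: b => [|b IH]; first by rewrite big_ord0.
by rewrite big_ord_recr /= IH binS.
Qed.

Section Pos.
Variable R : numDomainType.
Local Open Scope ring_scope.

Definition PM n (a b : nat -> nat) : 'M[R]_n := \matrix_(i, j) ('C(b j, a i))%:R.
Definition incr n (a : nat -> nat) := forall i, (i.+1 < n)%N -> (a i < a i.+1)%N.

Lemma incr_lt n a : incr n a -> forall i j, (i < j)%N -> (j < n)%N -> (a i < a j)%N.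
Proof.
move=> ha i j; elim: j => // j IH; rewrite ltnS leq_eqVlt => /orP[/eqP-> | lt] jn.
  exact: ha.
by apply: ltn_trans (IH lt (ltnW jn)) (ha _ jn).
Qed.

Lemma incr_le n a : incr n a -> forall i j, (i <= j)%N -> (j < n)%N -> (a i <= a j)%N.
Proof.
move=> ha i j; rewrite leq_eqVlt => /orP[/eqP-> // | lt] jn.
exact/ltnW/(incr_lt ha).
Qed.

Lemma sum_interval (B lo hi a : nat) : (lo <= hi <= B)%N ->
  \sum_(k < B) (if (lo <= k < hi)%N then ('C(k, a))%:R else 0 : R)
  = ('C(hi, a.+1))%:R - ('C(lo, a.+1))%:R.
Proof.
case/andP=> lh hB.
have E : forall h, (h <= B)%N ->
    \sum_(k < B) (if (k < h)%N then ('C(k, a))%:R else 0 : R) = ('C(h, a.+1))%:R.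
  move=> h hB'; rewrite -big_mkcond /= -(big_ord_widen B (fun k => ('C(k, a))%:R : R)) //.
  by rewrite -natr_sum hockey.
rewrite -(E hi hB) -(E lo (leq_trans lh hB)) -sumrB; apply: eq_bigr => k _.
case: (ltnP k lo) => kl.
  by rewrite (leq_trans kl lh) /= subrr.
by rewrite /= subr0.
Qed.

Lemma det_expand n B (F : 'I_n -> 'I_n -> 'I_B -> R) :
  \det (\matrix_(i, j) \sum_(k < B) F i j k) =
  \sum_(g : {ffun 'I_n -> 'I_B}) \det (\matrix_(i, j) F i j (g j)).
Proof.
rewrite -det_tr {1}/determinant.
under eq_bigr => s _ do under eq_bigr => i _ do rewrite !mxE.
under eq_bigr => s _ do rewrite bigA_distr_bigA big_distrr /=.
rewrite exchange_big /=; apply: eq_bigr => g _.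
rewrite -det_tr /determinant; apply: eq_bigr => s _; congr (_ * _).
by apply: eq_bigr => i _; rewrite !mxE.
Qed.

Lemma det_col0 n (A : 'M[R]_n) j0 : (forall i, A i j0 = 0) -> \det A = 0.
Proof.
move=> h; rewrite (expand_det_col _ j0) big1 // => i _; by rewrite h mul0r.
Qed.


Definition Qm N (al lo hi : nat -> nat) B : 'M[R]_N :=
  \matrix_(i, j) \sum_(k < B)
     (if (lo j <= k < hi j)%N then ('C(k, al i))%:R else 0 : R).

Definition ext N B (g : {ffun 'I_N -> 'I_B}) (j : nat) : nat :=
  odflt 0%N (omap (fun o => nat_of_ord (g o)) (insub j)).

Lemma extE N B (g : {ffun 'I_N -> 'I_B}) (o : 'I_N) : ext g o = g o.
Proof. by rewrite /ext valK. Qed.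

Lemma Q_pos N al lo hi B :
  incr N al -> (forall j, (j.+1 < N)%N -> (hi j <= lo j.+1)%N) ->
  (forall j, (j < N)%N -> (hi j <= B)%N) ->
  (forall g, incr N g -> 0 <= \det (PM N al g) /\
     ((forall i, (i < N)%N -> (al i <= g i)%N) -> 0 < \det (PM N al g))) ->
  0 <= \det (Qm N al lo hi B) /\
  ((forall j, (j < N)%N -> (lo j < hi j)%N /\ (al j < hi j)%N) ->
     0 < \det (Qm N al lo hi B)).
Proof.
move=> hal hlh hB IH.
have term : forall g : {ffun 'I_N -> 'I_B},
   [forall j : 'I_N, (lo j <= g j < hi j)%N] ->
   \det (\matrix_(i, j) (if (lo j <= g j < hi j)%N then ('C(g j, al i))%:R else 0 : R))
   = \det (PM N al (ext g)) /\ incr N (ext g).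
  move=> g /forallP H; split.
    congr (\det _); apply/matrixP => i j; rewrite !mxE H extE //.
  move=> i iN; have iN' : (i < N)%N by apply: ltnW.
  have := H (Ordinal iN); have := H (Ordinal iN).
  rewrite -[i]/(nat_of_ord (Ordinal iN')) -[i.+1]/(nat_of_ord (Ordinal iN)) !extE.
  move=> /andP[_ h1] /andP[h2 _].
  have := hlh i iN; have := H (Ordinal iN'); move=> /andP[_ h3] h4.
  by apply: leq_trans h3 (leq_trans h4 h2).
have term0 : forall g : {ffun 'I_N -> 'I_B},
   ~~ [forall j : 'I_N, (lo j <= g j < hi j)%N] ->
   \det (\matrix_(i, j) (if (lo j <= g j < hi j)%N then ('C(g j, al i))%:R else 0 : R)) = 0.
  move=> g /forallPn [j Hj]; apply: (det_col0 (j0 := j)) => i.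
  by rewrite mxE (negPf Hj).
have ge0 : forall g : {ffun 'I_N -> 'I_B},
   0 <= \det (\matrix_(i, j) (if (lo j <= g j < hi j)%N then ('C(g j, al i))%:R else 0 : R)).
  move=> g; case H: [forall j : 'I_N, (lo j <= g j < hi j)%N].
    by case: (term g H) => -> /IH [].
  by rewrite term0 ?H.
rewrite /Qm det_expand; split; first by apply: sumr_ge0 => g _; exact: ge0.
move=> hpos.
have hp : forall j : 'I_N, ((hi j).-1 < B)%N.
  move=> j; have [h1 _] := hpos j (ltn_ord j); have := hB j (ltn_ord j).
  by case: (hi j) h1 => //= h _ hb.
set g0 : {ffun 'I_N -> 'I_B} := [ffun j => Ordinal (hp j)].
rewrite (bigD1 g0) //=; apply: ltr_wpDr; first by apply: sumr_ge0 => g _; exact: ge0.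
have H : [forall j : 'I_N, (lo j <= g0 j < hi j)%N].
  apply/forallP => j; rewrite /g0 ffunE /=; have [h1 _] := hpos j (ltn_ord j).
  by case: (hi j) h1 => //= h; rewrite ltnS => ->; rewrite ltnSn.
case: (term g0 H) => -> /IH [_]; apply => i iN.
rewrite -[i]/(nat_of_ord (Ordinal iN)) extE /g0 ffunE /=.
have [_ h2] := hpos i iN; by case: (hi i) h2.
Qed.


Definition Umx n : 'M[R]_n :=
  \matrix_(k, j) (if k == j then 1 else if (k.+1 == j)%N then -1 else 0).

Lemma det_U n : \det (Umx n) = 1.
Proof.
rewrite -det_tr det_trig; last first.
  apply/is_trig_mxP => i j ij; rewrite !mxE.
  have -> : (j == i) = false by apply/negbTE/eqP => e; move: ij; rewrite e ltnn.
  have -> : (j.+1 == i)%N = false by apply/negbTE/eqP; lia.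
  by [].
by rewrite big1 // => i _; rewrite !mxE eqxx.
Qed.

Lemma mulU n (A : 'M[R]_n.+1) i j :
  (A *m Umx n.+1) i j = A i j - (if (0 < j)%N then A i (inord j.-1) else 0).
Proof.
rewrite mxE (bigD1 j) //= !mxE eqxx mulr1.
case: (posnP j) => [j0 | jp].
  rewrite subr0 big1 ?addr0 // => k kj; rewrite !mxE (negPf kj) j0 /= mulr0 //.
have k0j : (inord j.-1 : 'I_n.+1) != j.
  rewrite -val_eqE /= inordK; [apply/eqP; lia | have := ltn_ord j; lia].
have hj1 : (j.-1 < n.+1)%N by have := ltn_ord j; lia.
rewrite (bigD1 (inord j.-1)) //= !mxE (negPf k0j) inordK // prednK // eqxx.
rewrite mulrN1 big1 ?addr0 // => k /andP[kj kk0].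
rewrite !mxE (negPf kj); case: eqP => [e|]; last by rewrite mulr0.
by move: kk0; rewrite -val_eqE /= -e /= inordK ?eqxx // ltnW.
Qed.

Lemma det_PMU n a b : \det (PM n.+1 a b) = \det (PM n.+1 a b *m Umx n.+1).
Proof. by rewrite det_mulmx det_U mulr1. Qed.


Lemma PMU_E n a b i j :
  (PM n.+1 a b *m Umx n.+1) i j =
  ('C(b j, a i))%:R - (if (0 < j)%N then ('C(b j.-1, a i))%:R else 0).
Proof.
rewrite mulU !mxE; case: posnP => // _; rewrite inordK //.
by have := ltn_ord j; lia.
Qed.

Definition Pp n a b := 0 <= \det (PM n a b) /\
  ((forall i, (i < n)%N -> (a i <= b i)%N) -> 0 < \det (PM n a b)).

Lemma case_pos n a b : incr n.+1 a -> incr n.+1 b -> (0 < a 0)%N ->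
  (forall g, incr n.+1 g -> Pp n.+1 (fun i => (a i).-1) g) -> Pp n.+1 a b.
Proof.
move=> ha hb a0 IH.
have apos : forall i, (i < n.+1)%N -> (0 < a i)%N.
  by move=> i hi; apply: leq_trans a0 (incr_le ha (leq0n i) hi).
have ble : forall j, (j < n.+1)%N -> (b j <= b n)%N.
  by move=> j hj; apply: (incr_le hb) => //; rewrite -ltnS.
rewrite /Pp det_PMU.
have -> : PM n.+1 a b *m Umx n.+1 =
   Qm n.+1 (fun i => (a i).-1) (fun j => if (0 < j)%N then b j.-1 else 0%N) b (b n).
  apply/matrixP => i j; rewrite PMU_E mxE sum_interval; last first.
    apply/andP; split; last exact: ble.
    case: posnP => // j0; apply: ltnW; apply: (incr_lt hb); [|exact: ltn_ord].
    by rewrite prednK.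
  rewrite prednK; last exact: apos. case: posnP => // j0.
  by rewrite (@bin_small 0 (a i)) ?subr0 //; apply: apos.
have [Q1 Q2] := Q_pos (al := fun i => (a i).-1)
   (lo := fun j => if (0 < j)%N then b j.-1 else 0%N) (hi := b) (B := b n)
   (N := n.+1) ltac:(move=> i hi; have := ha i hi; have := apos i (ltnW hi); lia)
   ltac:(by move=> j _ /=) ltac:(by move=> j hj; apply: ble) IH.
split => // hle; apply: Q2 => j hj; split.
    case: posnP => j0.
      by have := hle j hj; have := apos j hj; lia.
    by apply: (incr_lt hb) => //; lia.
  have := hle j hj; have := apos j hj; lia.
Qed.

Lemma case_zero n a b : incr n.+1 a -> incr n.+1 b -> a 0 = 0%N ->
  (forall g, incr n g -> Pp n (fun i => (a i.+1).-1) g) -> Pp n.+1 a b.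
Proof.
move=> ha hb a0 IH.
have apos : forall i, (i < n)%N -> (0 < a i.+1)%N.
  by move=> i hi; rewrite -a0; apply: (incr_lt ha).
have ble : forall j, (j < n)%N -> (b j.+1 <= b n)%N.
  by move=> j hj; apply: (incr_le hb).
rewrite /Pp det_PMU (expand_det_row _ ord0) (bigD1 ord0) //= big1; last first.
  move=> j j0; rewrite PMU_E a0 !bin0.
  have -> : (0 < j)%N by rewrite lt0n; apply: contra j0 => /eqP e; apply/eqP/val_inj.
  by rewrite subrr mul0r.
rewrite addr0 PMU_E a0 bin0 subr0 mul1r /cofactor /= expr0 mul1r.
have -> : row' ord0 (col' ord0 (PM n.+1 a b *m Umx n.+1)) =
   Qm n (fun i => (a i.+1).-1) b (fun j => b j.+1) (b n).
  apply/matrixP => i j.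
  have E : forall A : 'M[R]_n.+1, row' ord0 (col' ord0 A) i j = A (lift ord0 i) (lift ord0 j) by move=> A; rewrite !mxE.
  rewrite E PMU_E !lift0 /= mxE sum_interval; last first.
    apply/andP; split; [apply: ltnW; apply: hb; have := ltn_ord j; simpl; lia | apply: ble; exact: ltn_ord].
  by rewrite prednK //; apply: apos; exact: ltn_ord.
have [Q1 Q2] := Q_pos (al := fun i => (a i.+1).-1)
   (lo := b) (hi := fun j => b j.+1) (B := b n)
   (N := n) ltac:(move=> i hi; have := ha i.+1 hi; have := apos i (ltnW hi); lia)
   ltac:(by move=> j _ /=) ltac:(by move=> j hj; apply: ble) IH.
split => // hle; apply: Q2 => j hj; split; first by apply: hb.
  have := hle j.+1 hj; have := apos j hj; lia.
Qed.

Lemma PM_pos n : forall a b, incr n a -> incr n b -> Pp n a b.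
Proof.
elim: n => [|n IHn] a b.
  by move=> _ _; rewrite /Pp det_mx00 ler01 ltr01.
move: (leqnn (a 0%N)); move: {2}(a 0%N) => k.
elim: k a b => [|k IHk] a b ha0 ha hb.
  apply: case_zero => //; first by move: ha0; rewrite leqn0 => /eqP.
  move=> g hg; apply: IHn => // i hi.
  have := ha i.+1 hi; have : (0 < a i.+1)%N.
    have a00 : a 0%N = 0%N by lia.
    rewrite -a00; apply: (incr_lt ha) => //; lia.
  lia.
case: (posnP (a 0%N)) => a0.
  apply: case_zero => // g hg; apply: IHn => // i hi.
  have := ha i.+1 hi; have : (0 < a i.+1)%N.
    by rewrite -a0; apply: (incr_lt ha) => //; lia.
  lia.
apply: case_pos => // g hg; apply: IHk => //; first by lia.
move=> i hi; have := ha i hi; have : (0 < a i)%N.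
  by apply: leq_trans a0 (incr_le ha (leq0n i) (ltnW hi)).
lia.
Qed.

End Pos.

Lemma bigmax_ord_spec K (P : nat -> bool) : P 0 ->
  let x := \max_(i < K.+1 | P i) i in
  [/\ x < K.+1, P x & forall i, i < K.+1 -> P i -> i <= x].
Proof.
move=> P0 x; have Pord0 : P (@ord0 K) by [].
have hx := @bigmax_eq_arg _ ord0 (fun i : 'I_K.+1 => P i) (fun i => nat_of_ord i) Pord0.
split.
- by rewrite /x hx.
- by rewrite /x hx; case: arg_maxnP.
- move=> i iK Pi; rewrite /x; exact: (leq_bigmax_cond (Ordinal iK)).
Qed.

Section Comb.
Variables (m n : nat) (r c : seq nat).
Hypotheses (hr : selection r) (hc : selection c) (sr : size r = m.+1)
  (sc : size c = n.+1) (h0 : nth 0 r 0 <= nth 0 c n).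

Local Notation rr i := (nth 0 r i).
Local Notation cc i := (nth 0 c i).
Local Notation f := (firstcol r c).

Lemma rlt i j : i < j -> j < m.+1 -> rr i < rr j.
Proof.
move=> ij jm; apply: (sorted_ltn_nth ltn_trans 0 hr); rewrite ?inE ?sr //.
exact: ltn_trans ij jm.
Qed.

Lemma rle i j : i <= j -> j < m.+1 -> rr i <= rr j.
Proof. by rewrite leq_eqVlt => /orP[/eqP -> // | ij] jm; apply/ltnW/rlt. Qed.

Lemma clt i j : i < j -> j < n.+1 -> cc i < cc j.
Proof.
move=> ij jm; apply: (sorted_ltn_nth ltn_trans 0 hc); rewrite ?inE ?sc //.
exact: ltn_trans ij jm.
Qed.

Lemma cle i j : i <= j -> j < n.+1 -> cc i <= cc j.
Proof. by rewrite leq_eqVlt => /orP[/eqP -> // | ij] jm; apply/ltnW/clt. Qed.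

Lemma f_before i k : k < f i -> cc k < rr i.
Proof. by move=> /(before_find 0) /= /negbT; rewrite -ltnNge. Qed.

Lemma f_le i k : rr i <= cc k -> f i <= k.
Proof. by move=> h; rewrite leqNgt; apply/negP => /f_before; rewrite ltnNge h. Qed.

Lemma f_spec i : rr i <= cc n -> f i <= n /\ rr i <= cc (f i).
Proof.
move=> h; split; first exact: f_le.
have hh : has (fun ck => rr i <= ck) c by apply/hasP; exists (cc n) => //; rewrite mem_nth ?sc.
exact: (nth_find 0 hh).
Qed.

Lemma f_mono i i' : i <= i' -> i' < m.+1 -> f i <= f i'.
Proof.
move=> ii' i'm; case: (ltnP (f i') n.+1) => h.
  have hh : has (fun ck => rr i' <= ck) c by rewrite has_find sc.
  apply: f_le; apply: leq_trans (rle ii' i'm) (nth_find 0 hh).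
by apply: leq_trans h; rewrite -sc; apply: find_size.
Qed.

Lemma beta_f i : f i <= beta r c i.
Proof. by case: i => //= i; apply: leq_maxl. Qed.

Lemma beta_S i : beta r c i < beta r c i.+1.
Proof. by rewrite /= leq_max leqnn orbT. Qed.

Lemma beta_lt i j : i < j -> beta r c i < beta r c j.
Proof.
elim: j => // j IH; rewrite ltnS leq_eqVlt => /orP[/eqP -> | ij]; first exact: beta_S.
exact: ltn_trans (IH ij) (beta_S j).
Qed.

Lemma beta_le i j : i <= j -> beta r c i <= beta r c j.
Proof. by rewrite leq_eqVlt => /orP[/eqP -> // | ij]; apply/ltnW/beta_lt. Qed.

Local Notation M := (Mdef m n r c).

Lemma M_spec : [/\ M < m.+1, rr M <= cc n &
   forall i, i < m.+1 -> rr i <= cc n -> i <= M].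
Proof. exact: (@bigmax_ord_spec m (fun i => rr i <= cc n) h0). Qed.

Lemma M_le i : i <= M -> rr i <= cc n.
Proof. case: M_spec => M1 M2 _ iM; apply: leq_trans M2; apply: rle iM M1. Qed.

Local Notation p := (pdef m n r c).

Lemma p_spec : [/\ p <= M, beta r c p <= n &
   forall i, i <= M -> beta r c i <= n -> i <= p].
Proof.
have P0 : beta r c 0 <= n by case: (f_spec h0).
case: (@bigmax_ord_spec M (fun i => beta r c i <= n) P0) => h1 h2 h3.
by split => // i iM; apply: h3.
Qed.

Lemma p_beta i : i <= p -> beta r c i <= n.
Proof. by case: p_spec => _ h _ ip; apply: leq_trans (beta_le ip) h. Qed.

Lemma hat_ok i : i <= p -> rr i <= cc (beta r c i).
Proof.
move=> ip; case: p_spec => pM _ _.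
have [_ h] := f_spec (M_le (leq_trans ip pM)).
apply: leq_trans h (cle (beta_f i) _); rewrite ltnS; exact: p_beta.
Qed.

End Comb.

Lemma sorted_sub (s1 s2 : seq nat) : sorted ltn s1 -> sorted ltn s2 ->
  {subset s1 <= s2} -> subseq s1 s2.
Proof.
move=> h1 h2 sub; have u2 := sorted_uniq ltn_trans ltnn h2.
apply/(@subseq_uniqP _ s1 s2 u2); apply: (irr_sorted_eq ltn_trans ltnn) => //.
  exact: (sorted_filter ltn_trans).
by move=> x; rewrite mem_filter; case: (boolP (x \in s1)) => // /sub ->.
Qed.

Lemma sorted_mkseq (g : nat -> nat) k : (forall i, i.+1 < k -> g i < g i.+1) ->
  sorted ltn (mkseq g k).
Proof.
move=> h; apply/(sortedP 0) => i; rewrite size_mkseq => ik.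
rewrite !nth_mkseq //; [exact: h | exact: ltnW].
Qed.

Lemma mem_mkseqP (g : nat -> nat) k x : x \in mkseq g k -> exists2 i, i < k & x = g i.
Proof. by case/mapP => i; rewrite mem_iota add0n => ik ->; exists i. Qed.

Lemma subseq_idx (s1 s2 : seq nat) : sorted ltn s2 -> subseq s1 s2 ->
  let a := fun j => index (nth 0 s1 j) s2 in
  (forall j, j < size s1 -> nth 0 s2 (a j) = nth 0 s1 j /\ a j < size s2) /\
  (forall j, j.+1 < size s1 -> a j < a j.+1).
Proof.
move=> h2 sub a; have h1 := subseq_sorted ltn_trans sub h2.
have mem : forall j, j < size s1 -> nth 0 s1 j \in s2.
  by move=> j js; apply: (mem_subseq sub); rewrite mem_nth.
have P1 : forall j, j < size s1 -> nth 0 s2 (a j) = nth 0 s1 j /\ a j < size s2.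
  by move=> j js; rewrite nth_index ?index_mem ?mem.
split => // j js.
have lt1 : nth 0 s1 j < nth 0 s1 j.+1 by move/(sortedP 0): h1 => /(_ j js).
case: (P1 j (ltnW js)) => e1 l1; case: (P1 j.+1 js) => e2 l2.
rewrite ltnNge leq_eqVlt; apply/negP => /orP[/eqP e | lt].
  by move: lt1; rewrite -e1 -e2 e ltnn.
have := sorted_ltn_nth ltn_trans 0 h2; move=> /(_ (a j.+1) (a j)).
rewrite !inE l1 l2 => /(_ isT isT lt); rewrite e1 e2 => lt2.
by move: (ltn_trans lt1 lt2); rewrite ltnn.
Qed.

Section Max.
Variables (m n : nat) (r c : seq nat).
Hypotheses (hr : selection r) (hc : selection c) (sr : size r = m.+1)
  (sc : size c = n.+1) (h0 : nth 0 r 0 <= nth 0 c n).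

Lemma maximal : maximal_ordered_subpair r c (rhat m n r c) (chat m n r c).
Proof.
have [pM pb pmax] := p_spec m sc h0.
have [M1 M2 M3] := M_spec m h0.
have pm : pdef m n r c <= m by rewrite -ltnS; apply: leq_ltn_trans pM M1.
split.
  split.
  - apply: sorted_sub => //.
      apply: sorted_mkseq => i ip; apply: (rlt hr sr) => //; lia.
    move=> x /mem_mkseqP [i ip ->]; apply: mem_nth; rewrite sr; lia.
  - apply: sorted_sub => //.
      apply: sorted_mkseq => i ip; apply: (clt hc sc); first exact: beta_S.
      rewrite ltnS; apply: (@p_beta m _ _ _ sc h0); lia.
    move=> x /mem_mkseqP [i ip ->]; apply: mem_nth; rewrite sc ltnS.
    exact: (@p_beta m _ _ _ sc h0).
  - by rewrite /rhat /chat !size_mkseq.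
  - move=> i; rewrite size_mkseq => ip; rewrite !nth_mkseq //.
    exact: (hat_ok hr hc sr sc h0).
move=> r' c' [sub1 sub2 ssz hle].
case E: (size r') => [|q] //.
have [A1 A2] := subseq_idx hr sub1; have [B1 B2] := subseq_idx hc sub2.
set a := fun j => index (nth 0 r' j) r in A1 A2.
set b := fun j => index (nth 0 c' j) c in B1 B2.
have ja : forall j, j < size r' -> j <= a j.
  elim=> // j IH js; apply: leq_ltn_trans (IH (ltnW js)) (A2 j js).
have am : forall j, j < size r' -> a j < m.+1.
  by move=> j js; have [_] := A1 j js; rewrite sr.
have bn : forall j, j < size r' -> b j < n.+1.
  by move=> j js; have [_] := B1 j (ltac:(by rewrite -ssz)); rewrite sc.
have rab : forall j, j < size r' -> nth 0 r (a j) <= nth 0 c (b j).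
  move=> k ks; have [e1 _] := A1 k ks; have [e2 _] := B1 k (ltac:(by rewrite -ssz)).
  by rewrite e1 e2; apply: hle.
have key : forall j, j < size r' -> j <= Mdef m n r c /\ beta r c j <= b j.
  move=> j js; split.
    apply: leq_trans (ja j js) _; apply: M3; first exact: am.
    apply: leq_trans (rab j js) _; apply: (cle hc sc) => //.
    by rewrite -ltnS; apply: bn.
  elim: j js => [|j IH] js.
    apply: leq_trans (f_mono hr sr sc (leq0n (a 0)) (am 0 js)) _.
    exact: (f_le (rab 0 js)).
  rewrite /= geq_max; apply/andP; split.
    apply: leq_trans (f_mono hr sr sc (ja _ js) (am _ js)) _.
    exact: (f_le (rab _ js)).
  apply: leq_ltn_trans (IH (ltnW js)) _; apply: B2; by rewrite -ssz.
have qs : q < size r' by rewrite E.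
have [k1 k2] := key q qs.
rewrite /rhat size_mkseq ltnS; apply: pmax => //; apply: leq_trans k2 _.
by rewrite -ltnS; apply: bn.
Qed.

End Max.

Section Rank.
Variable R : fieldType.
Local Open Scope ring_scope.

Lemma pidmulE m1 n1 s (A : 'M[R]_(m1, n1)) i j :
  (pid_mx s *m A) i j = if (i < s)%N then A i j else 0.
Proof.
rewrite mxE (bigD1 i) //= big1 ?addr0; last first.
  by move=> k ki; rewrite mxE eq_sym (inj_eq val_inj) (negPf ki) mul0r.
by rewrite mxE eqxx /=; case: ifP; rewrite ?mul1r ?mul0r.
Qed.

Lemma mulpidE m1 n1 t (A : 'M[R]_(m1, n1)) i j :
  (A *m pid_mx t) i j = if (j < t)%N then A i j else 0.
Proof.
rewrite mxE (bigD1 j) //= big1 ?addr0; last first.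
  by move=> k kj; rewrite mxE (inj_eq val_inj) (negPf kj) mulr0.
by rewrite mxE eqxx /=; case: ifP; rewrite ?mulr1 ?mulr0.
Qed.

Lemma rank_cover m1 n1 (A : 'M[R]_(m1, n1)) s t : (s <= m1)%N -> (t <= n1)%N ->
  (forall (i : 'I_m1) (j : 'I_n1), (s <= i)%N -> (j < t)%N -> A i j = 0) ->
  (\rank A <= s + (n1 - t))%N.
Proof.
move=> sm tn h0.
pose X := (pid_mx s : 'M[R]_m1) *m A; pose Y := A - X.
have eA : A = X + Y by rewrite /Y addrC subrK.
have eY : Y = Y *m copid_mx t.
  apply/matrixP => i j; rewrite /copid_mx mulmxBr mulmx1 [in RHS]mxE [X in _ + X]mxE mulpidE.
  case: ifP => jt; last by rewrite subr0.
  rewrite subrr /Y /X [LHS]mxE [X in _ + X]mxE pidmulE; case: ifP => iS; first by rewrite subrr.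
  by rewrite h0 ?subr0 // leqNgt iS.
have rX : (\rank X <= s)%N.
  by apply: leq_trans (mxrankM_maxl _ _) _; rewrite rank_pid_mx.
have rY : (\rank Y <= n1 - t)%N.
  by rewrite eY; apply: leq_trans (mxrankM_maxr _ _) _; rewrite rank_copid_mx.
rewrite eA; apply: leq_trans (mxrankS (addmx_sub_adds (submx_refl X) (submx_refl Y))) _.
apply: leq_trans (mxrank_adds_leqif X Y).1 _.
exact: leq_add.
Qed.

Lemma rank_rowsub m1 m2 n1 (f : 'I_m2 -> 'I_m1) (A : 'M[R]_(m1, n1)) :
  (\rank (rowsub f A) <= \rank A)%N.
Proof. by rewrite rowsubE; apply: mxrankM_maxr. Qed.

Lemma sub_rowsub m1 m2 n1 (f : 'I_m2 -> 'I_m1) (A : 'M[R]_(m1, n1)) :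
  (rowsub f A <= A)%MS.
Proof. by rewrite rowsubE; apply: submxMl. Qed.

Lemma rank_colsub m1 n1 n2 (g : 'I_n2 -> 'I_n1) (A : 'M[R]_(m1, n1)) :
  (\rank (colsub g A) <= \rank A)%N.
Proof. have -> : colsub g A = A *m colsub g 1%:M by rewrite mulmx_colsub mulmx1. exact: mxrankM_maxl. Qed.

End Rank.

Section Main.
Variable R : numFieldType.
Variables (m n : nat) (r c : seq nat).
Hypotheses (hr : selection r) (hc : selection c) (sr : size r = m.+1)
  (sc : size c = n.+1) (h0 : nth 0 r 0 <= nth 0 c n).

Local Notation A := (Tsub R m.+1 n.+1 r c).
Local Notation p := (pdef m n r c).
Local Notation f := (firstcol r c).

Lemma restart i : exists s, [/\ s <= i, beta r c s = f s &
   beta r c i = beta r c s + (i - s)].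
Proof.
elim: i => [|i [s [si bs bi]]]; first by exists 0; split => //; rewrite addn0.
case: (leqP (f i.+1) (beta r c i).+1) => h.
  exists s; split => //; first by apply: leq_trans si _.
  by rewrite /= (maxn_idPr h) bi; lia.
exists i.+1; split => //=; last by rewrite subnn addn0.
by rewrite (maxn_idPl (ltnW h)).
Qed.

Lemma rank_upper : \rank A <= p.+1.
Proof.
have [pM pb pmax] := p_spec m sc h0.
have [M1 M2 M3] := M_spec m h0.
case: (ltnP p (Mdef m n r c)) => hpM.
  have bp : beta r c p = n.
    have : ~~ (beta r c p.+1 <= n) by apply/negP => /(pmax _ hpM); rewrite ltnn.
    have [fn _] := f_spec sc (M_le hr sr h0 hpM).
    rewrite /= -ltnNge leq_max ltnNge fn /= => h; apply/eqP; rewrite eqn_leq pb; lia.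
  have [s [sp bs bps]] := restart p.
  have pm : p <= m by rewrite -ltnS; apply: leq_ltn_trans pM M1.
  have fs : f s <= n by rewrite -bs -bp; apply: beta_le.
  apply: leq_trans (rank_cover (s := s) (t := f s) _ _ _) _.
  - lia.
  - lia.
  - move=> i j si jf; rewrite mxE bin_small //; apply: f_before.
    apply: leq_trans jf (f_mono hr sr sc si (ltn_ord i)).
  - lia.
have pM' : p = Mdef m n r c by apply/eqP; rewrite eqn_leq pM hpM.
apply: leq_trans (rank_cover (s := (Mdef m n r c).+1) (t := n.+1) _ _ _) _ => //.
- move=> i j si _; rewrite mxE bin_small //.
  apply: leq_ltn_trans (@cle _ _ hc sc j n _ _) _; [by rewrite -ltnS | by [] | ].
  rewrite ltnNge; apply/negP => h; have := M3 _ (ltn_ord i) h; rewrite leqNgt si.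
  by [].
- by rewrite subnn addn0 pM'.
Qed.

End Main.
End Helpers.
Import Helpers.

Theorem theorem3 (R : numFieldType) (m n : nat) (r c : seq nat) :
  selection r -> selection c -> size r = m.+1 -> size c = n.+1 ->
  (nth 0 c n < nth 0 r 0 ->
     Tsub R m.+1 n.+1 r c = 0%R /\ \rank (Tsub R m.+1 n.+1 r c) = 0) /\
  (nth 0 r 0 <= nth 0 c n ->
     let p := pdef m n r c in
     let hr := rhat m n r c in
     let hc := chat m n r c in
     [/\ maximal_ordered_subpair r c hr hc,
         \rank (Tsub R m.+1 n.+1 r c) = p.+1,
         Tsub R p.+1 p.+1 hr hc \in unitmx,
         row_free (Tsub R p.+1 n.+1 hr c) /\
           (Tsub R p.+1 n.+1 hr c == Tsub R m.+1 n.+1 r c)%MS &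
         row_free (Tsub R m.+1 p.+1 r hc)^T%R /\
           ((Tsub R m.+1 p.+1 r hc)^T%R == (Tsub R m.+1 n.+1 r c)^T%R)%MS]).
Proof.
move=> hr hc sr sc; split.
  move=> hlt.
  have E : Tsub R m.+1 n.+1 r c = 0%R.
    apply/matrixP => i j; rewrite !mxE bin_small //.
    apply: leq_ltn_trans (@cle _ _ hc sc j n _ _) _; [by rewrite -ltnS | by [] | ].
    apply: leq_trans hlt (@rle _ _ hr sr 0 i _ _) => //.
  by rewrite E mxrank0.
move=> h0; cbv zeta.
have Hmax := maximal hr hc sr sc h0.
have rU := rank_upper R hr hc sr sc h0.
have [pM pb pmax] := p_spec m sc h0.
have [M1 M2 M3] := M_spec m h0.
set p := pdef m n r c in pM pb pmax rU Hmax *.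
have pm : (p < m.+1)%N by apply: leq_ltn_trans pM M1.
have bn : forall j, (j < p.+1)%N -> (beta r c j < n.+1)%N.
  by move=> j jp; rewrite ltnS; apply: (@p_beta m _ _ _ sc h0).
set A := Tsub R m.+1 n.+1 r c.
have Hunit : Tsub R p.+1 p.+1 (rhat m n r c) (chat m n r c) \in unitmx.
  have -> : Tsub R p.+1 p.+1 (rhat m n r c) (chat m n r c) =
      PM R p.+1 (fun i => nth 0 r i) (fun j => nth 0 c (beta r c j)).
    by apply/matrixP => i j; rewrite !mxE !nth_mkseq.
  rewrite unitmxE unitfE.
  have [_ hpos] := @PM_pos R p.+1 (fun i => nth 0 r i) (fun j => nth 0 c (beta r c j))
    ltac:(move=> i ip; apply: (rlt hr sr (ltnSn i)); lia)
    ltac:(move=> i ip; apply: (clt hc sc (beta_S r c i)); exact: bn).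
  apply: lt0r_neq0; apply: hpos => i ip.
  apply: (hat_ok hr hc sr sc h0); by rewrite -ltnS.
pose f1 := fun i : 'I_p.+1 => widen_ord pm i.
pose g := fun j : 'I_p.+1 => (inord (beta r c j) : 'I_n.+1).
have gE : forall j : 'I_p.+1, nat_of_ord (g j) = beta r c j.
  by move=> j; rewrite inordK // bn.
have eB1 : Tsub R p.+1 n.+1 (rhat m n r c) c = rowsub f1 A.
  by apply/matrixP => i j; rewrite !mxE nth_mkseq.
have eB2 : Tsub R m.+1 p.+1 r (chat m n r c) = colsub g A.
  by apply/matrixP => i j; rewrite !mxE nth_mkseq // gE.
have eH1 : Tsub R p.+1 p.+1 (rhat m n r c) (chat m n r c) = colsub g (rowsub f1 A).
  by apply/matrixP => i j; rewrite !mxE !nth_mkseq // gE.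
have eH2 : Tsub R p.+1 p.+1 (rhat m n r c) (chat m n r c) = rowsub f1 (colsub g A).
  by apply/matrixP => i j; rewrite !mxE !nth_mkseq // gE.
have rH := mxrank_unit Hunit.
have rB1 : \rank (rowsub f1 A) = p.+1.
  apply/eqP; rewrite eqn_leq rank_leq_row /=.
  by rewrite -{1}rH eH1; apply: rank_colsub.
have rA : \rank A = p.+1.
  apply/eqP; rewrite eqn_leq rU /= -rB1; exact: rank_rowsub.
have rB2 : \rank (colsub g A) = p.+1.
  apply/eqP; rewrite eqn_leq rank_leq_col /=.
  by rewrite -{1}rH eH2; apply: rank_rowsub.
have eB2T : (colsub g A)^T%R = rowsub g A^T%R.
  by apply/matrixP => i j; rewrite !mxE.
split => //.
- split; first by rewrite /row_free eB1 rB1.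
  by rewrite eB1 -(mxrank_leqif_eq (sub_rowsub f1 A)).2 rB1 rA.
- rewrite eB2 eB2T; split; first by rewrite /row_free -eB2T mxrank_tr rB2.
  by rewrite -(mxrank_leqif_eq (sub_rowsub g A^T%R)).2 -eB2T !mxrank_tr rB2 rA.
Qed.
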